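(* Let $\Gamma$ be a countable bounded abelian group that does not have property $(\ast)$. Then any Hausdorff topological group $G$ in which $\Gamma$ can be embedded as a dense subgroup has a non-trivial open subgroup of finite index.
   Context: An abelian group is bounded if the orders of its elements are bounded. By Prüfer's theorem a bounded countable abelian group is a direct sum of finite cyclic groups; $m_\Gamma(p^n)\in\mathbb{N}\cup\{\infty\}$ denotes the number of summands isomorphic to $\mathbb{Z}/p^n\mathbb{Z}$ ($p$ prime, $n\ge1$). $\Gamma$ has property $(\ast)$ if for all primes $p$ and $n\ge1$, $m_\Gamma(p^n)>0$ implies there is $k\ge n$ with $m_\Gamma(p^k)=\infty$. *)

(* Defs.v *)
From HB Require Import structures.
From mathcomp Require Import all_boot all_order all_algebra.
From mathcomp Require Import all_classical all_reals topology.
Set Implicit Arguments. Unset Strict Implicit. Unset Printing Implicit Defensive.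
Import GRing.Theory.
Local Open Scope ring_scope.

Definition bounded_group (Γ : zmodType) : Prop :=
  exists N : nat, (0 < N)%N /\ forall x : Γ, x *+ N = 0.

(* A direct-sum decomposition of Γ into finite cyclic subgroups of prime-power
   order: Γ = ⊕_{i : I} <e i>, where <e i> ≅ Z/(k i), k i = p^n, n >= 1. *)
Definition cyclic_decomposition (Γ : zmodType) (I : eqType)
    (e : I -> Γ) (k : I -> nat) : Prop :=
  [/\ (forall i, exists p n, [/\ prime p, (0 < n)%N & k i = (p ^ n)%N]),
      (forall i, e i *+ k i = 0),
      (forall x : Γ, exists (s : seq I) (c : I -> nat),
          x = \sum_(i <- s) e i *+ c i) &
      (forall (s : seq I) (c : I -> nat), uniq s ->
          \sum_(i <- s) e i *+ c i = 0 ->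
          forall i, i \in s -> (k i %| c i)%N)].

Definition mult_pos (I : eqType) (k : I -> nat) (q : nat) : Prop :=
  exists i, k i = q.

Definition mult_infinite (I : eqType) (k : I -> nat) (q : nat) : Prop :=
  ~ (exists s : seq I, forall i, k i = q -> i \in s).

Definition property_star (I : eqType) (k : I -> nat) : Prop :=
  forall p n : nat, prime p -> (0 < n)%N -> mult_pos k (p ^ n) ->
    exists m : nat, (n <= m)%N /\ mult_infinite k (p ^ m).

Definition topological_group (G : topologicalType)
    (mul : G -> G -> G) (inv : G -> G) (one : G) : Prop :=
  (forall x y z, mul x (mul y z) = mul (mul x y) z) /\
  (forall x, mul one x = x) /\ (forall x, mul x one = x) /\
  (forall x, mul (inv x) x = one) /\ (forall x, mul x (inv x) = one) /\
  continuous (fun xy : G * G => mul xy.1 xy.2) /\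
  continuous inv.

(* Main.v *)
Require Import Defs.
From HB Require Import structures.
From mathcomp Require Import all_boot all_order all_algebra.
From mathcomp Require Import all_classical all_reals topology.
Set Implicit Arguments.
Import GRing.Theory.
Local Open Scope ring_scope.
Local Open Scope classical_set_scope.

Section Top.
Variables (G : topologicalType) (mul : G -> G -> G).
Hypothesis cmul : continuous (fun xy : G * G => mul xy.1 xy.2).

Lemma cont_mul2 (T : topologicalType) (a b : T -> G) :
  continuous a -> continuous b -> continuous (fun x => mul (a x) (b x)).
Proof.
move=> ca cb x.
have cp : (fun y => (a y, b y)) @ x --> (a x, b x).
  by apply: cvg_pair; [exact: ca | exact: cb].
exact: (@continuous_comp T (G * G)%type G (fun y => (a y, b y)) (fun xy : G * G => mul xy.1 xy.2) x cp (cmul _)).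
Qed.
End Top.

Lemma dense_eq (T U : topologicalType) (S : set T) (phi psi : T -> U) :
  hausdorff_space U -> continuous phi -> continuous psi -> dense S ->
  (forall x, S x -> phi x = psi x) -> forall x, phi x = psi x.
Proof.
move=> hU cphi cpsi dS Heq x; apply: hU => A B Ah Bh.
have : nbhs x (phi @^-1` A `&` psi @^-1` B).
  by apply: filterI; [exact: cphi | exact: cpsi].
rewrite nbhsE => -[O [Oo Ox] OAB].
have [y [Oy Sy]] := dS O (ex_intro _ x Ox) Oo.
exists (phi y); split; first by have [] := OAB y Oy.
by rewrite Heq //; have [] := OAB y Oy.
Qed.

Lemma nbhs_avoid (T : topologicalType) (A : eqType) (hT : hausdorff_space T)
  (s : seq A) (u : A -> T) (y : T) :
  (forall a, a \in s -> y <> u a) ->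
  nbhs y [set z | forall a, a \in s -> z <> u a].
Proof.
elim: s => [|a s IH] H.
  by apply: filterE => z a; rewrite in_nil.
have H1 : nbhs y [set z | z <> u a].
  apply: contrapT => Hn; apply: (H a (mem_head _ _)); apply: hT => B C yB uC.
  apply: contrapT => e0; apply: Hn; apply: filterS yB => z Bz zu.
  by apply: e0; exists z; split => //; rewrite zu; exact: nbhs_singleton.
have H2 := IH (fun b bs => H b (mem_behead (s:=a :: s) bs)).
apply: filterS (filterI H1 H2) => z [z1 z2] b; rewrite in_cons => /orP [/eqP -> | bs].
  exact: z1.
exact: z2.
Qed.

Local Close Scope classical_set_scope.
Local Close Scope ring_scope.
Lemma nat_facts p n N r j : prime p -> (0 < n)%N -> (0 < N)%N -> prime r ->
  (r ^ j %| N)%N -> ~~ (r ^ j %| p ^ n.-1 * N`_(p^'))%N ->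
  r = p /\ (n <= j <= logn p N)%N.
Proof.
move=> pp n0 N0 pr dN ndm.
have rp : r = p.
  apply/eqP; apply: contraNT ndm => rnp.
  apply: dvdn_mull.
  have pn : (p^').-nat (r ^ j) by rewrite pnatX pnatE // !inE rnp.
  rewrite -(part_pnat_id pn); exact: partn_dvd.
split=> //; subst r.
rewrite -pfactor_dvdn // dN andbT.
rewrite leqNgt; apply: contra ndm => jn.
apply: dvdn_mulr; apply: dvdn_exp2l; by case: n n0 jn.
Qed.

Lemma nat_fact2 p n N : prime p -> (0 < n)%N -> ~~ (p ^ n %| p ^ n.-1 * N`_(p^'))%N.
Proof.
move=> pp n0; case: n n0 => // n _ /=.
rewrite expnSr dvdn_pmul2l ?expn_gt0 ?prime_gt0 //.
apply/negP => /pnat_dvd /(_ (part_pnat _ _)).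
by rewrite pnatE // !inE eqxx.
Qed.

Local Open Scope ring_scope.

Lemma reduce (Γ : zmodType) (I : eqType) (e : I -> Γ) (m : nat) (S0 : seq I) :
  uniq S0 -> (forall i, e i *+ m != 0 -> i \in S0) ->
  forall (s : seq I) (c : I -> nat), exists d : I -> nat,
    \sum_(i <- s) e i *+ (c i * m) = \sum_(i <- S0) e i *+ (d i * m).
Proof.
move=> uS HS; elim=> [|i s IH] c.
  by exists (fun _ => 0%N); rewrite big_nil big1 // => j _; rewrite mul0n mulr0n.
have [d Hd] := IH c; rewrite big_cons Hd.
have [z|nz] := eqVneq (e i *+ m) 0.
  by exists d; rewrite mulnC mulrnA z mul0rn add0r.
exists (fun j => d j + (j == i) * c i)%N.
under [RHS]eq_bigr do rewrite mulnDl mulrnDr.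
rewrite big_split /= addrC; congr (_ + _).
rewrite (bigD1_seq i) ?HS //= eqxx mul1n big1 ?addr0 // => j /negbTE ->.
by rewrite !mul0n mulr0n.
Qed.

Lemma modN (Γ : zmodType) (x : Γ) (N d : nat) : x *+ N = 0 -> x *+ d = x *+ (d %% N).
Proof.
move=> xN; rewrite {1}(divn_eq d N) mulrnDr mulrnA.
by rewrite mulrnAC xN mul0rn add0r.
Qed.

Lemma gamma_fin (Γ : zmodType) (I : eqType) (e : I -> Γ) (k : I -> nat) :
  bounded_group Γ -> cyclic_decomposition e k -> ~ property_star k ->
  exists (m : nat) (W : seq Γ),
   (forall x : Γ, exists2 w, w \in W & x *+ m = w *+ m) /\ exists z : Γ, z *+ m != 0.
Proof.
move=> [N [N0 HN]] [Hpp Hek Hgen Huniq] nstar.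
have Hstar : exists p n, prime p /\ (0 < n)%N /\
   mult_pos k (p ^ n)%N /\ forall j, (n <= j)%N ->
   exists s : seq I, forall i, k i = (p ^ j)%N -> i \in s.
  apply: contrapT => H; apply: nstar => p n pp n0 mp; apply: contrapT => H2.
  apply: H; exists p, n; do 3 split => //.
  move=> j nj; apply: contrapT => H3; apply: H2; exists j; split => //.
have [p [n [pp [n0 [mp Hfin]]]]] := Hstar; have [i0 ki0] := mp.
have kN : forall i, (k i %| N)%N.
  move=> i; apply: (Huniq [:: i] (fun _ => N)) => //; last by rewrite mem_seq1.
  by rewrite big_seq1 HN.
have kill : forall i t, (k i %| t)%N -> e i *+ t = 0.
  by move=> i t /dvdnP [u ->]; rewrite mulrnA mulrnAC Hek mul0rn.
set m := (p ^ n.-1 * N`_(p^'))%N.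
have : forall j, exists s : seq I, (n <= j)%N -> forall i, k i = (p ^ j)%N -> i \in s.
  move=> j; case: (leqP n j) => nj; first by have [s Hs] := Hfin j nj; exists s.
  by exists [::].
move/choice => [sf Hsf].
set S0 := undup (flatten [seq sf j | j <- iota 0 (logn p N).+1]).
have HS : forall i, e i *+ m != 0 -> i \in S0.
  move=> i nz; have [r [j [pr j0 kij]]] := Hpp i.
  have [rp /andP [nj jl]] : r = p /\ (n <= j <= logn p N)%N.
    apply: (@nat_facts p n N r j pp n0 N0 pr); first by rewrite -kij kN.
    by apply/negP; rewrite -kij => dv; have h := kill i _ dv; move: nz; rewrite /m h eqxx.
  rewrite mem_undup; apply/flattenP; exists (sf j); last by apply: Hsf; rewrite // kij rp.
  by apply: map_f; rewrite mem_iota /= add0n ltnS.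
exists m.
exists [seq \sum_(j < size S0) e (nth i0 S0 j) *+ val (ff j)
         | ff : {ffun 'I_(size S0) -> 'I_N} <- enum {ffun 'I_(size S0) -> 'I_N}].
split; last first.
  exists (e i0); apply/negP => /eqP h.
  have : (k i0 %| m)%N by apply: (Huniq [:: i0] (fun _ => m)) => //; [rewrite big_seq1 | rewrite mem_seq1].
  by rewrite ki0; apply/negP; apply: nat_fact2.
move=> x; have [s [c ->]] := Hgen x.
have [d Hd] := @reduce _ _ e m S0 (undup_uniq _) HS s c.
pose ff := [ffun j : 'I_(size S0) => Ordinal (ltn_pmod (d (nth i0 S0 j)) N0)].
exists (\sum_(j < size S0) e (nth i0 S0 j) *+ val (ff j)).
  by apply: map_f; rewrite mem_enum.
rewrite -sumrMnl.
under eq_bigr do rewrite -mulrnA.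
rewrite Hd.
under eq_bigr do rewrite mulrnA.
rewrite sumrMnl; congr (_ *+ _).
rewrite (big_nth i0) big_mkord; apply: eq_bigr => j _.
by rewrite ffunE /= -modN.
Qed.
Unset Implicit Arguments.

Local Open Scope classical_set_scope.

Fixpoint pw (G : Type) (mul : G -> G -> G) (one : G) (n : nat) (g : G) : G :=
  if n is n'.+1 then mul g (@pw G mul one n' g) else one.

Theorem proposition2p1 (Γ : countZmodType) :
  bounded_group Γ ->
  (exists (I : eqType) (e : I -> Γ) (k : I -> nat),
      cyclic_decomposition e k /\ ~ property_star k) ->
  forall (G : topologicalType) (mul : G -> G -> G) (inv : G -> G) (one : G),
    topological_group mul inv one ->
    hausdorff_space G ->
    forall f : Γ -> G,
      injective f ->
      (forall x y : Γ, f (x + y) = mul (f x) (f y)) ->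
      dense (range f) ->
      exists H : set G,
        H one /\
        (forall x y, H x -> H y -> H (mul x y)) /\
        (forall x, H x -> H (inv x)) /\
        open H /\
        H <> setT /\
        (exists (m : nat) (g : 'I_m -> G),
            forall x : G, exists j : 'I_m, H (mul (inv (g j)) x)).
Proof.
move=> bd [I [e [k [cd ns]]]] G mul inv one [ass [l1 [r1 [linv [rinv [cmul cinv]]]]]]
  hG f finj fhom fd.
have [m [W [HW [z nz]]]] := gamma_fin bd cd ns.
have cid : continuous (fun x : G => x) by move=> x; exact: cvg_id.
have f0 : f 0 = one.
  have h := fhom 0 0; rewrite addr0 in h.
  by rewrite -(l1 (f 0)) -(linv (f 0)) -ass -h.
have comm0 : forall a x, mul x (f a) = mul (f a) x.
  move=> a; apply: (dense_eq hG _ _ fd).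
  - by apply: cont_mul2 => //; exact: cst_continuous.
  - by apply: cont_mul2 => //; exact: cst_continuous.
  by move=> _ [b _ <-]; rewrite -!fhom addrC.
have comm : forall x y, mul x y = mul y x.
  move=> x; apply: (dense_eq hG _ _ fd).
  - by apply: cont_mul2 => //; exact: cst_continuous.
  - by apply: cont_mul2 => //; exact: cst_continuous.
  by move=> _ [b _ <-]; rewrite comm0.
pose P := @pw G mul one m.
have cP : continuous P.
  rewrite /P; elim: (m) => [|n IH] /=; first exact: cst_continuous.
  exact: cont_mul2.
have Pf : forall x, P (f x) = f (x *+ m).
  rewrite /P; elim: (m) => [|n IH] x /=; first by rewrite mulr0n f0.
  by rewrite IH mulrS fhom.
have Pmul : forall x y, P (mul x y) = mul (P x) (P y).
  rewrite /P; elim: (m) => [|n IH] x y /=; first by rewrite l1.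
  rewrite IH -!ass; congr (mul x _).
  by rewrite !ass (comm y).
have Pone : P one = one.
  rewrite /P; elim: (m) => [|n IH] //=; by rewrite IH l1.
have Pinv : forall a, mul (P (inv a)) (P a) = one.
  by move=> a; rewrite -Pmul linv Pone.
have key : forall x, exists2 w, w \in W & P x = f (w *+ m).
  move=> x; apply: contrapT => Hn.
  have HV : nbhs (P x) [set y | forall w, w \in W -> y <> f (w *+ m)].
    apply: nbhs_avoid => // w wW Pe; apply: Hn; by exists w.
  have := cP x _ HV; rewrite nbhsE => -[O [Oo Ox] OV].
  have [y [Oy [b _ eb]]] := fd O (ex_intro _ x Ox) Oo; subst y.
  have [w wW bw] := HW b.
  by apply: (OV _ Oy w wW); rewrite /= Pf bw.
exists [set g | P g = one]; split; first exact: Pone.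
split; first by move=> x y /= Px Py; rewrite Pmul Px Py l1.
split.
  move=> x /= Px; by rewrite -(r1 (P (inv x))) -Px Pinv.
split.
  rewrite openE => g /= Pg; rewrite /interior.
  have HV : nbhs (P g) [set y | forall w, w \in [seq w <- W | w *+ m != 0] -> y <> f (w *+ m)].
    apply: nbhs_avoid => // w; rewrite mem_filter => /andP [wn _].
    rewrite Pg -f0 => /finj h; by rewrite -h eqxx in wn.
  have := cP g _ HV; rewrite !nbhsE => -[O [Oo Og] OV]; exists O => // y Oy.
  have Hy := OV y Oy.
  have [w wW Pw] := key y.
  have [wz|wnz] := eqVneq (w *+ m) 0; first by rewrite /= Pw wz f0.
  by exfalso; apply: (Hy w); rewrite // mem_filter wnz.
split.
  move=> HT; have : [set g | P g = one] (f z) by rewrite HT.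
  by rewrite /= Pf -f0 => /finj h; rewrite h eqxx in nz.
exists (size W), (fun j => f (nth 0 W j)) => x.
have [w wW Pw] := key x.
have iw : (index w W < size W)%N by rewrite index_mem.
exists (Ordinal iw); rewrite /= nth_index //.
by rewrite Pmul Pw -Pf Pinv.
Qed.
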